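(* Let $n$ be a positive multiple of $4$, $\gamma\in\mathbb{R}$, $|\chi(\gamma)\rangle=\left(\cos(\gamma/4)|0\rangle^{\otimes4}+\sin(\gamma/4)|1\rangle^{\otimes 4}\right)^{\otimes n/4}$ and $\rho_\gamma=|\chi(\gamma)\rangle\langle\chi(\gamma)|$. Define $N_0=1$, $N_2(\gamma)=N_6(\gamma)=4\cos^2(\gamma/2)$, $N_4(\gamma)=6+8\sin^2(\gamma/2)$, $N_8=1$. Then for $\alpha\in\{0,\dots,2n\}$, $$\mathcal{P}_\alpha(\rho_\gamma)=\frac{1}{2^n}\sum_{\substack{i_0,i_2,i_4,i_6,i_8\ge0\\ i_0+i_2+i_4+i_6+i_8=n/4\\ 2i_2+4i_4+6i_6+8i_8=\alpha}}\frac{(n/4)!}{i_0!\,i_2!\,i_4!\,i_6!\,i_8!}\,N_2(\gamma)^{i_2}N_4(\gamma)^{i_4}N_6(\gamma)^{i_6}N_8^{i_8}.$$ In particular $\mathcal{P}_\alpha(\rho_\gamma)=0$ for odd $\alpha$.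
   Context: On $\mathcal{H}=(\mathbb{C}^2)^{\otimes n}$ define the Majorana operators $c_{2j-1}=Z^{\otimes(j-1)}\otimes X\otimes\mathbb{1}^{\otimes(n-j)}$ and $c_{2j}=Z^{\otimes(j-1)}\otimes Y\otimes\mathbb{1}^{\otimes(n-j)}$ for $j=1,\dots,n$. For $\alpha=0,\dots,2n$, $\mathcal{L}_\alpha\subseteq\mathcal{L}(\mathcal{H})$ is the span of the products $c_{i_1}\cdots c_{i_\alpha}$ with $1\le i_1<\dots<i_\alpha\le 2n$. The orthonormal basis used consists of the Hermitian Pauli strings (up to sign) in $\mathcal{L}_\alpha$ divided by $\sqrt{2^n}$, and $\mathcal{P}_\alpha(\rho)=\sum_\mu\mathrm{Tr}[B^\mu\rho]^2$ over this basis. *)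

(* Defs.v *)
From HB Require Import structures.
From mathcomp Require Import all_boot all_order all_algebra.
From mathcomp Require Import boolp reals trigo complex.
Set Implicit Arguments. Unset Strict Implicit. Unset Printing Implicit Defensive.
Import Order.TTheory GRing.Theory Num.Theory.
Local Open Scope ring_scope.
Local Open Scope complex_scope.

Section Defs.
Variable R : realType.

(* Computational basis of (C^2)^{\otimes n} indexed by x : 'I_(2^n);
   qubit j (0-based, j = 0 is the leftmost tensor factor) of basis state x
   is the bit of x at position n-1-j (most significant bit first). *)
Definition qbit (n j : nat) (x : nat) : bool := odd (x %/ 2 ^ (n - j.+1)).

(* Single-qubit Paulis, coded by 'I_4 : 0 = 1, 1 = X, 2 = Y, 3 = Z.
   Entry (r, c) with r, c the row/column bit. *)
Definition pauli1 (a : 'I_4) (r c : bool) : R[i] :=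
  match val a with
  | 0 => if r == c then 1 else 0
  | 1 => if r == c then 0 else 1
  | 2 => if r == c then 0 else if r then 'i else - 'i
  | _ => if r == c then (if r then -1 else 1) else 0
  end.

Definition pauli_mx (n : nat) (p : {ffun 'I_n -> 'I_4}) : 'M[R[i]]_(2 ^ n) :=
  \matrix_(r, c) \prod_(j < n) pauli1 (p j) (qbit n j r) (qbit n j c).

Definition PI : 'I_4 := inord 0.
Definition PX : 'I_4 := inord 1.
Definition PY : 'I_4 := inord 2.
Definition PZ : 'I_4 := inord 3.

(* Majorana operators, 0-based: for k : 'I_(2n) with j = k / 2,
   k even  <-> c_{2j+1} (1-based, X at qubit j),
   k odd   <-> c_{2j+2} (1-based, Y at qubit j);
   Z on qubits < j, identity on qubits > j. *)
Definition majorana (n : nat) (k : 'I_(2 * n)) : 'M[R[i]]_(2 ^ n) :=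
  pauli_mx [ffun i : 'I_n =>
              if (i < k./2)%N then PZ
              else if (i == k./2 :> nat) then (if odd k then PY else PX)
              else PI].

(* The ordered product c_{i_1} ... c_{i_a} with i_1 < ... < i_a the
   elements of S (enum S lists them in increasing order). *)
Definition majorana_prod (n : nat) (S : {set 'I_(2 * n)}) : 'M[R[i]]_(2 ^ n) :=
  foldr (fun k M => majorana k *m M) 1%:M (enum S).

Definition in_L (n alpha : nat) (M : 'M[R[i]]_(2 ^ n)) : Prop :=
  exists a : {set 'I_(2 * n)} -> R[i],
    M = \sum_(S : {set 'I_(2 * n)} | #|S| == alpha) a S *: majorana_prod S.

Definition basis_el (n : nat) (p : {ffun 'I_n -> 'I_4}) : 'M[R[i]]_(2 ^ n) :=
  ((Num.sqrt (2 ^+ n : R))^-1)%:C *: pauli_mx p.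

Definition P_alpha (n alpha : nat) (rho : 'M[R[i]]_(2 ^ n)) : R[i] :=
  \sum_(p : {ffun 'I_n -> 'I_4} | `[< in_L alpha (pauli_mx p) >])
     (\tr (basis_el p *m rho)) ^+ 2.

Definition block_amp (g : R) (b0 b1 b2 b3 : bool) : R :=
  if ~~ b0 && ~~ b1 && ~~ b2 && ~~ b3 then cos (g / 4)
  else if b0 && b1 && b2 && b3 then sin (g / 4) else 0.

Definition chi (n : nat) (g : R) : 'cV[R[i]]_(2 ^ n) :=
  \col_x (\prod_(b < n %/ 4)
            block_amp g (qbit n (4 * b) x) (qbit n (4 * b + 1) x)
                        (qbit n (4 * b + 2) x) (qbit n (4 * b + 3) x))%:C.

Definition rho (n : nat) (g : R) : 'M[R[i]]_(2 ^ n) :=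
  chi n g *m map_mx (fun z => z^*) (chi n g)^T.

Definition N2 (g : R) : R := 4 * cos (g / 2) ^+ 2.
Definition N4 (g : R) : R := 6 + 8 * sin (g / 2) ^+ 2.
Definition N6 (g : R) : R := 4 * cos (g / 2) ^+ 2.

Definition P_formula (n alpha : nat) (g : R) : R :=
  let m := (n %/ 4)%N in
  (2 ^+ n : R)^-1 *
  \sum_(i0 < m.+1) \sum_(i2 < m.+1) \sum_(i4 < m.+1) \sum_(i6 < m.+1)
  \sum_(i8 < m.+1 | (i0 + i2 + i4 + i6 + i8 == m)%N &&
                    (2 * i2 + 4 * i4 + 6 * i6 + 8 * i8 == alpha)%N)
     ((m`!)%:R / ((i0`! * i2`! * i4`! * i6`! * i8`!)%N)%:R
      * N2 g ^+ i2 * N4 g ^+ i4 * N6 g ^+ i6 * 1 ^+ i8).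

End Defs.

(* Main.v *)
Require Import Defs.
From HB Require Import structures.
From mathcomp Require Import all_boot all_order all_algebra.
From mathcomp Require Import boolp reals trigo complex.
From mathcomp Require Import ring lra zify.
Import Order.TTheory GRing.Theory Num.Theory.
Local Open Scope ring_scope.
Local Open Scope complex_scope.
Set Implicit Arguments. Unset Strict Implicit. Unset Printing Implicit Defensive.


Definition bits (n : nat) (x : 'I_(2 ^ n)) : {ffun 'I_n -> bool} :=
  [ffun j : 'I_n => qbit n j x].

Lemma digits_inj n x y : (x < 2 ^ n)%N -> (y < 2 ^ n)%N ->
  (forall k, (k < n)%N -> odd (x %/ 2 ^ k) = odd (y %/ 2 ^ k)) -> x = y.
Proof.
elim: n x y => [|n IH] x y.
  by rewrite expn0 !ltnS !leqn0 => /eqP-> /eqP->.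
move=> hx hy h.
have h0 := h 0%N isT; rewrite !expn0 !divn1 in h0.
have e : x./2 = y./2.
  apply: IH.
  - rewrite expnS in hx; lia.
  - rewrite expnS in hy; lia.
  move=> k hk; have := h k.+1 hk.
  rewrite expnS !divnMA !divn2; idtac.
  by [].
have ex := odd_double_half x; have ey := odd_double_half y.
lia.
Qed.

Lemma bits_inj n : injective (@bits n).
Proof.
move=> x y /ffunP h; apply: val_inj; apply: (@digits_inj n); [exact: ltn_ord|exact: ltn_ord|].
move=> k hk.
have hj : (n - k.+1 < n)%N by lia.
have := h (Ordinal hj); rewrite !ffunE /qbit /=.
by have -> : (n - (n - k.+1).+1 = k)%N by lia.
Qed.

Lemma bits_bij n : bijective (@bits n).
Proof.
apply: inj_card_bij; first exact: bits_inj.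
by rewrite card_ffun card_bool !card_ord.
Qed.

Lemma sum_bits (V : nmodType) n (F : {ffun 'I_n -> bool} -> V) :
  \sum_(x : 'I_(2 ^ n)) F (bits x) = \sum_v F v.
Proof.
by rewrite (reindex (@bits n)) //; apply: onW_bij; exact: bits_bij.
Qed.

Definition o0 : 'I_4 := @Ordinal 4 0 isT.
Definition o1 : 'I_4 := @Ordinal 4 1 isT.
Definition o2 : 'I_4 := @Ordinal 4 2 isT.
Definition o3 : 'I_4 := @Ordinal 4 3 isT.
Definition xb (a : 'I_4) : bool := (val a == 1%N) || (val a == 2%N).
Definition zb (a : 'I_4) : bool := (val a == 2%N) || (val a == 3%N).
Definition enc (x z : bool) : 'I_4 :=
  if x then (if z then o2 else o1) else (if z then o3 else o0).
Definition pmul (a b : 'I_4) : 'I_4 := enc (xb a (+) xb b) (zb a (+) zb b).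

Lemma enc_xz a : enc (xb a) (zb a) = a.
Proof. by case: a => [[|[|[|[|?]]]] ?] //; apply: val_inj. Qed.
Lemma xb_enc x z : xb (enc x z) = x. Proof. by case: x; case: z. Qed.
Lemma zb_enc x z : zb (enc x z) = z. Proof. by case: x; case: z. Qed.

Section Pauli.
Variable R : realType.
Local Notation C := R[i].

Definition ph (a b : 'I_4) : C :=
  match val a, val b with
  | 1, 2 => 'i | 2, 1 => - 'i | 2, 3 => 'i | 3, 2 => - 'i
  | 3, 1 => 'i | 1, 3 => - 'i | _, _ => 1 end.

Lemma pauli1_mul (a b : 'I_4) (r c : bool) :
  \sum_(k : bool) pauli1 R a r k * pauli1 R b k c = ph a b * pauli1 R (pmul a b) r c.
Proof.
rewrite big_bool.
case: a => [[|[|[|[|?]]]] ?] //; case: b => [[|[|[|[|?]]]] ?] //;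
  case: r; case: c; rewrite /pauli1 /ph /pmul /xb /zb /=;
  apply/eqP; rewrite eq_complex /=; apply/andP; split; apply/eqP; ring.
Qed.

End Pauli.

Section Pauli2.
Variable R : realType.
Local Notation C := R[i].

Lemma i_neq0 : ('i : C) != 0.
Proof. by rewrite eq_complex /= oner_eq0 andbF. Qed.

Lemma ph_neq0 a b : ph R a b != 0.
Proof.
case: a => [[|[|[|[|?]]]] ?] //; case: b => [[|[|[|[|?]]]] ?] //;
  rewrite /ph /= ?oppr_eq0 ?oner_eq0 ?i_neq0 //.
Qed.

Lemma pauli_mxE n p r c :
  pauli_mx R p r c = \prod_(j < n) pauli1 R (p j) (bits r j) (bits c j).
Proof. by rewrite mxE; apply: eq_bigr => j _; rewrite !ffunE. Qed.

Definition pprod n (p q : {ffun 'I_n -> 'I_4}) : {ffun 'I_n -> 'I_4} :=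
  [ffun j => pmul (p j) (q j)].

Lemma pauli_mul n (p q : {ffun 'I_n -> 'I_4}) :
  pauli_mx R p *m pauli_mx R q =
  (\prod_(j < n) ph R (p j) (q j)) *: pauli_mx R (pprod p q).
Proof.
apply/matrixP => r c; rewrite [LHS]mxE [RHS]mxE.
under eq_bigr => k _ do rewrite !pauli_mxE -big_split /=.
rewrite (sum_bits (fun v => \prod_(j < n) (pauli1 R (p j) (bits r j) (v j) *
                                         pauli1 R (q j) (v j) (bits c j)))).
rewrite -(bigA_distr_bigA (fun j b => pauli1 R (p j) (bits r j) b *
                                         pauli1 R (q j) b (bits c j))) /=.
under eq_bigr => j _ do rewrite pauli1_mul.
rewrite big_split /= pauli_mxE.
congr (GRing.mul _ _); apply: eq_bigr; move=> j _; by rewrite [pprod _ _ _]ffunE.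
Qed.

Lemma pauli_tr n (p : {ffun 'I_n -> 'I_4}) :
  \tr (pauli_mx R p) = \prod_(j < n) (if p j == o0 then 2 else 0).
Proof.
rewrite /mxtrace.
under eq_bigr => k _ do rewrite pauli_mxE.
rewrite (sum_bits (fun v => \prod_(j < n) pauli1 R (p j) (v j) (v j))).
rewrite -(bigA_distr_bigA (fun j b => pauli1 R (p j) b b)) /=.
apply: eq_bigr => j _; rewrite big_bool.
case: (p j) => [[|[|[|[|?]]]] ?] //=; rewrite /pauli1 /=; try ring.
Qed.

End Pauli2.

Lemma pmul_eq0 a b : (pmul a b == o0) = (a == b).
Proof.
by case: a => [[|[|[|[|?]]]] ?] //; case: b => [[|[|[|[|?]]]] ?].
Qed.

Section Pauli3.
Variable R : realType.
Local Notation C := R[i].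

Lemma ph_diag a : ph R a a = 1.
Proof. by case: a => [[|[|[|[|?]]]] ?]. Qed.

Lemma pauli_id n : pauli_mx R [ffun _ : 'I_n => o0] = 1%:M.
Proof.
apply/matrixP => r c; rewrite pauli_mxE mxE.
case: (eqVneq r c) => [->|neq].
  by apply: big1 => j _; rewrite ffunE /pauli1 /= eqxx.
have : ~~ [forall j, bits r j == bits c j].
  apply: contra neq => /forallP h; apply/eqP/bits_inj/ffunP => j; exact/eqP/h.
rewrite negb_forall => /existsP [j hj].
by rewrite (bigD1 j) //= ffunE /pauli1 /= (negbTE hj) mul0r.
Qed.

Lemma tr_pauli_prod n (p q : {ffun 'I_n -> 'I_4}) :
  \tr (pauli_mx R p *m pauli_mx R q) = if p == q then 2 ^+ n else 0.
Proof.
rewrite pauli_mul mxtraceZ pauli_tr.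
case: (eqVneq p q) => [->|neq].
  rewrite big1 ?mul1r; last by move=> j _; rewrite ph_diag.
  rewrite (eq_bigr (fun _ => 2)) ?prodr_const ?card_ord // => j _.
  by rewrite ffunE pmul_eq0 eqxx.
have : ~~ [forall j, p j == q j].
  apply: contra neq => /forallP h; apply/eqP/ffunP => j; exact/eqP/h.
rewrite negb_forall => /existsP [j hj].
by rewrite [X in _ * X](bigD1 j) //= /pprod ffunE pmul_eq0 (negbTE hj) mul0r mulr0.
Qed.

End Pauli3.

Definition qL n (s : seq 'I_(2 * n)) : {ffun 'I_n -> 'I_4} :=
  [ffun j : 'I_n => enc (odd (count (fun k : 'I_(2 * n) => k./2 == j) s))
                         (odd (count (fun k : 'I_(2 * n) => j.*2.+1 <= k)%N s))].

Lemma valPZ : val PZ = 3%N. Proof. exact: inordK. Qed.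
Lemma valPY : val PY = 2%N. Proof. exact: inordK. Qed.
Lemma valPX : val PX = 1%N. Proof. exact: inordK. Qed.
Lemma valPI : val PI = 0%N. Proof. exact: inordK. Qed.

Definition mj n (k : 'I_(2 * n)) : {ffun 'I_n -> 'I_4} :=
  [ffun i : 'I_n =>
     if (i < k./2)%N then PZ
     else if (i == k./2 :> nat) then (if odd k then PY else PX)
     else PI].

Lemma xb_mj n (k : 'I_(2 * n)) j : xb (mj k j) = (k./2 == j).
Proof.
rewrite ffunE /xb; case: ifP => h1; first (rewrite valPZ /=; lia).
case: ifP => h2; first by case: (odd k); rewrite ?valPY ?valPX /=; lia.
rewrite valPI /=; lia.
Qed.

Lemma zb_mj n (k : 'I_(2 * n)) (j : 'I_n) : zb (mj k j) = (j.*2.+1 <= k)%N.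
Proof.
have e := odd_double_half k.
rewrite ffunE /zb; case: ifP => h1; first (rewrite valPZ /=; lia).
case: ifP => h2.
  by case ok: (odd k); rewrite ?valPY ?valPX /=; rewrite ok in e; lia.
rewrite valPI /=; lia.
Qed.

Lemma qL_cons n (k : 'I_(2 * n)) s : qL (k :: s) = pprod (mj k) (qL s).
Proof.
apply/ffunP => j; have := xb_mj k j; have := zb_mj k j.
rewrite /pprod !ffunE /pmul xb_enc zb_enc => -> ->; rewrite /= !oddD.
by case: (k./2 == j); case: (j.*2.+1 <= k)%N.
Qed.

Section Maj.
Variable R : realType.
Local Notation C := R[i].

Lemma majprod_list n (s : seq 'I_(2 * n)) : exists c : C, c != 0 /\
  foldr (fun k M => majorana R k *m M) 1%:M s = c *: pauli_mx R (qL s).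
Proof.
elim: s => [|k s [c [hc IH]]] /=.
  exists 1; split; first exact: oner_neq0.
  rewrite scale1r -(pauli_id R n); congr (pauli_mx R _).
exists (c * \prod_(j < n) ph R (mj k j) (qL s j)); split.
  by rewrite mulf_neq0 // prodf_seq_neq0; apply/allP => j _; rewrite ph_neq0.
rewrite IH -scalemxAr /majorana -/(mj k) pauli_mul scalerA qL_cons.
by [].
Qed.

End Maj.

Lemma half_lt n (k : 'I_(2 * n)) : (k./2 < n)%N.
Proof. have := ltn_ord k; lia. Qed.
Lemma lo_lt n (j : 'I_n) : (j.*2 < 2 * n)%N.
Proof. have := ltn_ord j; lia. Qed.
Lemma hi_lt n (j : 'I_n) : (j.*2.+1 < 2 * n)%N.
Proof. have := ltn_ord j; lia. Qed.

Definition half n (k : 'I_(2 * n)) : 'I_n := Ordinal (half_lt k).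
Definition lo n (j : 'I_n) : 'I_(2 * n) := Ordinal (lo_lt j).
Definition hi n (j : 'I_n) : 'I_(2 * n) := Ordinal (hi_lt j).

Definition mkp n (jb : 'I_n * bool) : 'I_(2 * n) :=
  if jb.2 then hi jb.1 else lo jb.1.
Definition unmkp n (k : 'I_(2 * n)) : 'I_n * bool := (half k, odd k).

Lemma mkp_bij n : bijective (@mkp n).
Proof.
exists (@unmkp n).
  move=> [j b]; rewrite /mkp /unmkp /=; case: b; congr (_, _);
    try (apply: val_inj => /=; lia); rewrite /=; lia.
move=> k; apply: val_inj; rewrite /mkp /unmkp /=.
have e := odd_double_half k.
by case ok: (odd k) => /=; rewrite ok in e; lia.
Qed.

Lemma big_pair (T : Type) (idx : T) (op : Monoid.com_law idx) n
    (F : 'I_(2 * n) -> T) :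
  \big[op/idx]_(k : 'I_(2 * n)) F k =
  \big[op/idx]_(j : 'I_n) op (F (lo j)) (F (hi j)).
Proof.
rewrite (reindex (@mkp n)) /=; last by apply: onW_bij; exact: mkp_bij.
rewrite -(pair_bigA op (fun j b => F (mkp (j, b)))) /=.
apply: eq_bigr => j _; rewrite big_bool /mkp /=.
exact: Monoid.mulmC.
Qed.

Lemma half_lo n (j : 'I_n) : half (lo j) = j.
Proof. apply: val_inj => /=; lia. Qed.
Lemma half_hi n (j : 'I_n) : half (hi j) = j.
Proof. apply: val_inj => /=; lia. Qed.
Lemma odd_lo n (j : 'I_n) : odd (lo j) = false.
Proof. by rewrite /= odd_double. Qed.
Lemma odd_hi n (j : 'I_n) : odd (hi j) = true.
Proof. by rewrite /= odd_double. Qed.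

Lemma countS (I : finType) (S : {set I}) (P : pred I) :
  count P (enum S) = (\sum_(k : I) ((k \in S) && P k))%N.
Proof.
rewrite -sum1_count big_enum_cond big_mkcond /=.
by apply: eq_bigr => k _; case: (_ && _).
Qed.

Lemma odd_sum (I : finType) (P : pred I) (F : I -> nat) :
  odd (\sum_(i | P i) F i)%N = odd (\sum_(i | P i) odd (F i))%N.
Proof.
apply: (big_ind2 (fun a b => odd a = odd b)) => //.
  by move=> x1 x2 y1 y2 h1 h2; rewrite !oddD h1 h2.
by move=> i _; rewrite oddb.
Qed.

Lemma xL n (S : {set 'I_(2 * n)}) (j : 'I_n) :
  odd (count (fun k : 'I_(2 * n) => k./2 == j) (enum S)) =
  (lo j \in S) (+) (hi j \in S).
Proof.
rewrite countS big_pair /= (bigD1 j) //= big1 ?addn0.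
  by rewrite !doubleK uphalf_double eqxx !andbT oddD !oddb.
move=> j' hj'.
have -> : ((j'.*2)./2 == j) = false by rewrite doubleK; exact: negbTE.
have -> : ((j'.*2.+1)./2 == j) = false.
  by rewrite -[(j'.*2.+1)./2]/(uphalf j'.*2) uphalf_double; exact: negbTE.
by rewrite !andbF.
Qed.

Lemma zL n (S : {set 'I_(2 * n)}) (j : 'I_n) :
  odd (count (fun k : 'I_(2 * n) => j.*2.+1 <= k)%N (enum S)) =
  (hi j \in S) (+) odd (\sum_(j' : 'I_n | (j < j')%N) ((lo j' \in S) + (hi j' \in S)))%N.
Proof.
rewrite countS big_pair /= (bigD1 j) //=.
have -> : (j.*2.+1 <= j.*2)%N = false by lia.
rewrite leqnn andbF andbT add0n oddD oddb; congr (_ (+) odd _).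
rewrite big_mkcond [RHS]big_mkcond /=; apply: eq_bigr => j' _.
case: (ltngtP j j') => h.
- have -> : j' != j by rewrite neq_ltn h orbT.
  have -> : (j.*2.+1 <= j'.*2)%N by lia.
  have -> : (j.*2.+1 <= j'.*2.+1)%N by lia.
  by rewrite !andbT.
- have -> : (j.*2.+1 <= j'.*2)%N = false by lia.
  have -> : (j.*2.+1 <= j'.*2.+1)%N = false by lia.
  by rewrite !andbF; case: (_ != _).
- have -> : j' = j by apply: val_inj; rewrite /= h.
  by rewrite eqxx.
Qed.

Definition par n (p : {ffun 'I_n -> 'I_4}) (j : 'I_n) : bool :=
  odd (\sum_(j' : 'I_n | (j < j')%N) xb (p j')).
Definition abit n (p : {ffun 'I_n -> 'I_4}) (j : 'I_n) (b : bool) : bool :=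
  (zb (p j) (+) par p j) (+) (~~ b && xb (p j)).
Definition Tset n (p : {ffun 'I_n -> 'I_4}) : {set 'I_(2 * n)} :=
  [set k | abit p (half k) (odd k)].

Lemma lo_in n p (j : 'I_n) : (lo j \in Tset p) = abit p j false.
Proof. by rewrite inE half_lo odd_lo. Qed.
Lemma hi_in n p (j : 'I_n) : (hi j \in Tset p) = abit p j true.
Proof. by rewrite inE half_hi odd_hi. Qed.

Lemma qL_Tset n (p : {ffun 'I_n -> 'I_4}) : qL (enum (Tset p)) = p.
Proof.
apply/ffunP => j; rewrite ffunE xL zL !lo_in !hi_in odd_sum.
under eq_bigr => j' _ do rewrite oddD !oddb lo_in hi_in.
have -> : (\sum_(j' < n | (j < j')%N) (abit p j' false (+) abit p j' true))%N =
          (\sum_(j' < n | (j < j')%N) xb (p j'))%N.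
  by apply: eq_bigr => j' _; rewrite /abit; case: (xb _); case: (zb _); case: (par _ _).
rewrite -/(par p j) -[RHS]enc_xz; congr enc; rewrite /abit;
  by case: (xb _); case: (zb _); case: (par _ _).
Qed.

Lemma abit_qL n (S : {set 'I_(2 * n)}) (j : 'I_n) b :
  abit (qL (enum S)) j b = if b then hi j \in S else lo j \in S.
Proof.
rewrite /abit /par ffunE xb_enc zb_enc xL zL odd_sum [X in _ (+) X (+) _]odd_sum.
have -> : (\sum_(j' < n | (j < j')%N) odd (xb (qL (enum S) j')))%N =
          (\sum_(j' < n | (j < j')%N) odd ((lo j' \in S) + (hi j' \in S)))%N.
  by apply: eq_bigr => j' _; rewrite ffunE xb_enc xL oddD !oddb.
by case: b; case: (lo j \in S); case: (hi j \in S); case: (odd _).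
Qed.

Lemma Tset_qL n (S : {set 'I_(2 * n)}) : Tset (qL (enum S)) = S.
Proof.
apply/setP => k; rewrite inE abit_qL.
have e := odd_double_half k.
case ok: (odd k); rewrite ok in e; congr (_ \in S); apply: val_inj => /=; lia.
Qed.

Definition dq n (p : {ffun 'I_n -> 'I_4}) (j : 'I_n) : nat :=
  if xb (p j) then 1%N else ((zb (p j) (+) par p j) : nat).*2.

Lemma card_Tset n (p : {ffun 'I_n -> 'I_4}) :
  #|Tset p| = (\sum_(j : 'I_n) dq p j)%N.
Proof.
rewrite -sum1_card big_mkcond /= big_pair /=; apply: eq_bigr => j _.
rewrite lo_in hi_in /dq /abit.
by case: (xb _); case: (zb _); case: (par _ _).
Qed.

Section InL.
Variable R : realType.
Local Notation C := R[i].

Lemma inL_iff n alpha (p : {ffun 'I_n -> 'I_4}) :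
  in_L alpha (pauli_mx R p) <-> #|Tset p| = alpha.
Proof.
split.
  move=> [a E]; apply/eqP; apply: contraT => hne.
  have : \tr (pauli_mx R p *m pauli_mx R p) = 0.
    rewrite [X in _ *m X]E mulmx_sumr (big_morph _ (@mxtraceD _ _) (mxtrace0 _ _)); apply: big1 => S /eqP hS.
    rewrite -scalemxAr mxtraceZ.
    case: (majprod_list R (enum S)) => c [_ E2].
    rewrite /majorana_prod E2 -scalemxAr mxtraceZ tr_pauli_prod.
    case: eqP => [e|]; last by rewrite !mulr0.
    by move: hne; rewrite e Tset_qL hS eqxx.
  rewrite tr_pauli_prod eqxx => /eqP; rewrite expf_eq0 /=.
  by rewrite pnatr_eq0 andbF.
move=> h.
case: (majprod_list R (enum (Tset p))) => c [hc E].
exists (fun S => if S == Tset p then c^-1 else 0).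
rewrite (bigD1 (Tset p)) /=; last by rewrite h.
rewrite eqxx big1 ?addr0.
  by rewrite /majorana_prod E qL_Tset scalerA mulVf // scale1r.
by move=> S /andP[_ hS]; rewrite (negbTE hS) scale0r.
Qed.

End InL.

Lemma idx_lt m (b : 'I_m) (t : 'I_4) : (4 * b + t < m * 4)%N.
Proof. have := ltn_ord b; have := ltn_ord t; lia. Qed.
Lemma blk_lt m (j : 'I_(m * 4)) : (j %/ 4 < m)%N.
Proof. have := ltn_ord j; lia. Qed.
Lemma off_lt (j : nat) : (j %% 4 < 4)%N.
Proof. lia. Qed.

Definition idx m (b : 'I_m) (t : 'I_4) : 'I_(m * 4) := Ordinal (idx_lt b t).
Definition blk m (j : 'I_(m * 4)) : 'I_m := Ordinal (blk_lt j).
Definition off m (j : 'I_(m * 4)) : 'I_4 := Ordinal (off_lt j).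

Lemma blk_idx m b t : blk (@idx m b t) = b.
Proof. apply: val_inj => /=; have := ltn_ord t; lia. Qed.
Lemma off_idx m b t : off (@idx m b t) = t.
Proof. apply: val_inj => /=; have := ltn_ord t; lia. Qed.
Lemma idx_blk m (j : 'I_(m * 4)) : idx (blk j) (off j) = j.
Proof. apply: val_inj => /=; lia. Qed.

Lemma big_blocks (T : Type) (id : T) (op : Monoid.com_law id) m
    (F : 'I_(m * 4) -> T) :
  \big[op/id]_(j : 'I_(m * 4)) F j =
  \big[op/id]_(b : 'I_m) \big[op/id]_(t : 'I_4) F (idx b t).
Proof.
rewrite pair_bigA /= (reindex (fun bt : 'I_m * 'I_4 => idx bt.1 bt.2)) //.
apply: onW_bij; exists (fun j => (blk j, off j)).
  by move=> [b t] /=; rewrite blk_idx off_idx.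
by move=> j /=; rewrite idx_blk.
Qed.

Definition flat (T : Type) m (h : {ffun 'I_m -> {ffun 'I_4 -> T}}) : {ffun 'I_(m * 4) -> T} :=
  [ffun j => h (blk j) (off j)].
Definition unflat (T : Type) m (f : {ffun 'I_(m * 4) -> T}) : {ffun 'I_m -> {ffun 'I_4 -> T}} :=
  [ffun b => [ffun t => f (idx b t)]].

Lemma flat_idx T m h b t : @flat T m h (idx b t) = h b t.
Proof. by rewrite ffunE blk_idx off_idx. Qed.

Lemma flat_bij (T : Type) m : bijective (@flat T m).
Proof.
exists (@unflat T m).
  by move=> h; apply/ffunP => b; apply/ffunP => t; rewrite !ffunE blk_idx off_idx.
by move=> f; apply/ffunP => j; rewrite !ffunE idx_blk.
Qed.

Lemma big_flat (T : finType) (U : Type) (id : U) (op : Monoid.com_law id) m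
    (F : {ffun 'I_(m * 4) -> T} -> U) :
  \big[op/id]_(f : {ffun 'I_(m * 4) -> T}) F f =
  \big[op/id]_(h : {ffun 'I_m -> {ffun 'I_4 -> T}}) F (flat h).
Proof. by rewrite (reindex (@flat T m)) //; apply: onW_bij; exact: flat_bij. Qed.

Lemma ffun4 (T : Type) (v w : {ffun 'I_4 -> T}) :
  v o0 = w o0 -> v o1 = w o1 -> v o2 = w o2 -> v o3 = w o3 -> v = w.
Proof.
move=> h0 h1 h2 h3; apply/ffunP => t.
by case: t => [[|[|[|[|?]]]] ?] //;
  [ rewrite (_ : Ordinal _ = o0) ?h0 //
  | rewrite (_ : Ordinal _ = o1) ?h1 //
  | rewrite (_ : Ordinal _ = o2) ?h2 //
  | rewrite (_ : Ordinal _ = o3) ?h3 // ]; apply: val_inj.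
Qed.

Section Trace.
Variable R : realType.
Variable g : R.
Local Notation C := R[i].

Definition cC : C := (cos (g / 4))%:C.
Definition sC : C := (sin (g / 4))%:C.
Definition amp (u : bool) : C := if u then sC else cC.
Definition AB (v : {ffun 'I_4 -> bool}) : R := block_amp g (v o0) (v o1) (v o2) (v o3).
Definition pi4 (q : {ffun 'I_4 -> 'I_4}) (u u' : bool) : C :=
  \prod_(t : 'I_4) pauli1 R (q t) u u'.
Definition fq (q : {ffun 'I_4 -> 'I_4}) : C :=
  \sum_(u : bool) \sum_(u' : bool) amp u * amp u' * pi4 q u u'.
Definition cf (b : bool) : {ffun 'I_4 -> bool} := [ffun _ => b].

Lemma BR (G : {ffun 'I_4 -> bool} -> C) :
  \sum_(v : {ffun 'I_4 -> bool}) G v * (AB v)%:C = G (cf false) * cC + G (cf true) * sC.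
Proof.
have hne : cf true != cf false by apply/eqP => /ffunP /(_ o0); rewrite !ffunE.
rewrite (bigD1 (cf false)) //= (bigD1 (cf true)) //=.
rewrite big1 ?addr0.
  by rewrite /AB /block_amp !ffunE /= /cC /sC.
move=> v /andP[h0 h1]; rewrite /AB /block_amp.
case: ifP => [/andP[/andP[/andP[a0 a1] a2] a3]|_].
  have e : v = cf false by apply: ffun4; rewrite ffunE; apply/negbTE.
  by rewrite e eqxx in h0.
case: ifP => [/andP[/andP[/andP[a0 a1] a2] a3]|_]; last by rewrite mulr0.
have e : v = cf true by apply: ffun4; rewrite ffunE.
by rewrite e eqxx in h1.
Qed.


Definition Ab m (v : {ffun 'I_(m * 4) -> bool}) : R :=
  \prod_(b < m) AB [ffun t => v (idx b t)].

Lemma chi_prod m (x : 'I_(2 ^ (m * 4))) :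
  (\prod_(b < m * 4 %/ 4) block_amp g (qbit (m * 4) (4 * b) x) (qbit (m * 4) (4 * b + 1) x)
        (qbit (m * 4) (4 * b + 2) x) (qbit (m * 4) (4 * b + 3) x)) = Ab (bits x).
Proof.
rewrite -(big_mkord xpredT (fun b => block_amp g (qbit (m * 4) (4 * b) x)
   (qbit (m * 4) (4 * b + 1) x) (qbit (m * 4) (4 * b + 2) x) (qbit (m * 4) (4 * b + 3) x))).
rewrite mulnK // big_mkord; apply: eq_bigr => b _.
by rewrite /AB !ffunE /= addn0.
Qed.

Lemma rhoE m (c r : 'I_(2 ^ (m * 4))) :
  rho (m * 4) g c r = (Ab (bits c))%:C * (Ab (bits r))%:C.
Proof.
rewrite /rho mxE big_ord1 !mxE !chi_prod.
by rewrite /conjc /= oppr0.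
Qed.


Lemma fq_blockE (q : {ffun 'I_4 -> 'I_4}) :
  \sum_(vb : {ffun 'I_4 -> bool}) \sum_(wb : {ffun 'I_4 -> bool})
     (\prod_(t : 'I_4) pauli1 R (q t) (vb t) (wb t)) * ((AB wb)%:C * (AB vb)%:C)
  = fq q.
Proof.
set P := fun vb wb : {ffun 'I_4 -> bool} => \prod_(t : 'I_4) pauli1 R (q t) (vb t) (wb t).
transitivity (\sum_(vb : {ffun 'I_4 -> bool})
   \sum_(wb : {ffun 'I_4 -> bool}) (P vb wb * (AB vb)%:C) * (AB wb)%:C).
  by apply: eq_bigr => vb _; apply: eq_bigr => wb _; rewrite /P; ring.
under eq_bigr => vb _ do rewrite (BR (fun wb => P vb wb * (AB vb)%:C)).
transitivity (\sum_(vb : {ffun 'I_4 -> bool})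
   (P vb (cf false) * cC + P vb (cf true) * sC) * (AB vb)%:C).
  by apply: eq_bigr => vb _; ring.
rewrite (BR (fun vb => P vb (cf false) * cC + P vb (cf true) * sC)).
rewrite /fq !big_bool /= /amp /pi4 /P.
have E : forall u u', \prod_(t : 'I_4) pauli1 R (q t) (cf u t) (cf u' t) =
                      \prod_(t : 'I_4) pauli1 R (q t) u u'.
  by move=> u u'; apply: eq_bigr => t _; rewrite !ffunE.
rewrite !E; ring.
Qed.

Lemma TR m (p : {ffun 'I_(m * 4) -> 'I_4}) :
  \tr (pauli_mx R p *m rho (m * 4) g) = \prod_(b < m) fq [ffun t => p (idx b t)].
Proof.
set K := fun (b : 'I_m) (vb wb : {ffun 'I_4 -> bool}) =>
  (\prod_(t : 'I_4) pauli1 R (p (idx b t)) (vb t) (wb t)) * ((AB wb)%:C * (AB vb)%:C).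
transitivity (\sum_(v : {ffun 'I_(m * 4) -> bool}) \sum_(w : {ffun 'I_(m * 4) -> bool})
  (\prod_(j < m * 4) pauli1 R (p j) (v j) (w j)) * ((Ab w)%:C * (Ab v)%:C)).
  rewrite /mxtrace -(sum_bits (fun v => \sum_(w : {ffun 'I_(m * 4) -> bool})
     (\prod_(j < m * 4) pauli1 R (p j) (v j) (w j)) * ((Ab w)%:C * (Ab v)%:C))).
  apply: eq_bigr => r _; rewrite mxE.
  rewrite -(sum_bits (fun w => (\prod_(j < m * 4) pauli1 R (p j) (bits r j) (w j)) *
                                ((Ab w)%:C * (Ab (bits r))%:C))).
  by apply: eq_bigr => c _; rewrite pauli_mxE rhoE.
rewrite big_flat; under eq_bigr => V _ do rewrite big_flat.
transitivity (\sum_(V : {ffun 'I_m -> {ffun 'I_4 -> bool}})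
   \sum_(W : {ffun 'I_m -> {ffun 'I_4 -> bool}}) \prod_(b < m) K b (V b) (W b)).
  apply: eq_bigr => V _; apply: eq_bigr => W _.
  have EF : forall (X : {ffun 'I_m -> {ffun 'I_4 -> bool}}) (b : 'I_m),
      [ffun t => flat X (idx b t)] = X b.
    by move=> X b; apply/ffunP => t; rewrite ffunE flat_idx.
  rewrite /K big_split big_split /= /Ab !rmorph_prod big_blocks.
  congr (GRing.mul _ (GRing.mul _ _)); apply: eq_bigr => b _.
  - by apply: eq_bigr => t _; rewrite !flat_idx.
  - by rewrite EF.
  - by rewrite EF.
transitivity (\prod_(b < m) \sum_(vb : {ffun 'I_4 -> bool})
                \sum_(wb : {ffun 'I_4 -> bool}) K b vb wb).
  symmetry; rewrite bigA_distr_bigA /=; apply: eq_bigr => V _.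
  by rewrite bigA_distr_bigA.
apply: eq_bigr => b _; rewrite -fq_blockE.
apply: eq_bigr => vb _; apply: eq_bigr => wb _; rewrite /K.
congr (GRing.mul _ _); apply: eq_bigr => t _; by rewrite ffunE.
Qed.

End Trace.

Definition d1 (a : 'I_4) : nat := if xb a then 1%N else (zb a : nat).*2.
Definition dblock (q : {ffun 'I_4 -> 'I_4}) : nat := (\sum_(t : 'I_4) d1 (q t))%N.
Definition xconst (q : {ffun 'I_4 -> 'I_4}) : bool :=
  [forall t, xb (q t)] || [forall t, ~~ xb (q t)].

Lemma par_zero m (h : {ffun 'I_m -> {ffun 'I_4 -> 'I_4}}) b t :
  (forall b, xconst (h b)) -> ~~ xb (h b t) -> par (flat h) (idx b t) = false.
Proof.
move=> H hx; rewrite /par big_mkcond big_blocks /= odd_sum big1 //.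
move=> b' _.
have hb : forall t', xb (h b t') = false.
  case/orP: (H b) => /forallP hb t'; first by move: hx; rewrite hb.
  exact/negbTE/hb.
set c := (if (idx b t < idx b' o0)%N then (xb (flat h (idx b' o0)) : nat) else 0%N).
rewrite (eq_bigr (fun _ => c)); last first.
  move=> t' _; rewrite /c !flat_idx.
  case: (ltngtP b b') => hbb.
  - have -> : (idx b t < idx b' t')%N by rewrite /=; have := ltn_ord t; lia.
    have -> : (idx b t < idx b' o0)%N by rewrite /=; have := ltn_ord t; lia.
    case/orP: (H b') => /forallP hb'.
      by rewrite !hb'.
    by rewrite !(negbTE (hb' _)).
  - have -> : (idx b t < idx b' t')%N = false by rewrite /=; have := ltn_ord t'; lia.
    have -> : (idx b t < idx b' o0)%N = false by rewrite /=; lia.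
    by [].
  - have eb : b' = b by apply: val_inj.
    by rewrite eb !hb; case: ifP; case: ifP.
by rewrite sum_nat_const card_ord oddM.
Qed.

Lemma DEG m (h : {ffun 'I_m -> {ffun 'I_4 -> 'I_4}}) :
  (forall b, xconst (h b)) -> #|Tset (flat h)| = (\sum_(b < m) dblock (h b))%N.
Proof.
move=> H; rewrite card_Tset big_blocks; apply: eq_bigr => b _.
apply: eq_bigr => t _; rewrite /dq /d1 flat_idx.
case hx: (xb (h b t)) => //.
by rewrite par_zero ?hx // addbF.
Qed.

Section Main.
Variable R : realType.
Variable g : R.
Local Notation C := R[i].

Lemma pauli1_diag0 a u : xb a -> pauli1 R a u u = 0.
Proof. by case: a => [[|[|[|[|?]]]] ?] //; case: u; rewrite /pauli1 /=. Qed.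
Lemma pauli1_off0 a u : ~~ xb a -> pauli1 R a u (~~ u) = 0.
Proof. by case: a => [[|[|[|[|?]]]] ?] //; case: u; rewrite /pauli1 /=. Qed.

Lemma fq_xconst q : fq g q != 0 -> xconst q.
Proof.
apply: contraR; rewrite /xconst negb_or !negb_forall => /andP[/existsP[t1 h1] /existsP[t2 h2]].
rewrite negbK in h2.
have D : forall u, pi4 R q u u = 0.
  by move=> u; rewrite /pi4 (bigD1 t2) //= pauli1_diag0 // mul0r.
have O : forall u, pi4 R q u (~~ u) = 0.
  by move=> u; rewrite /pi4 (bigD1 t1) //= pauli1_off0 // mul0r.
rewrite /fq !big_bool /= D D.
by rewrite (O true) (O false) !mulr0 !addr0.
Qed.

Lemma sq_sqrt_inv n : (((Num.sqrt (2 ^+ n : R))^-1)%:C ^+ 2 : C) = ((2 ^+ n : R)^-1)%:C.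
Proof. by rewrite -rmorphXn exprVn sqr_sqrtr // exprn_ge0. Qed.

Lemma P_sum m alpha :
  P_alpha alpha (rho (m * 4) g) =
  ((2 ^+ (m * 4) : R)^-1)%:C *
  \sum_(h : {ffun 'I_m -> {ffun 'I_4 -> 'I_4}})
     (if (\sum_(b < m) dblock (h b))%N == alpha then \prod_(b < m) fq g (h b) ^+ 2 else 0).
Proof.
rewrite /P_alpha.
rewrite (eq_bigl (fun p => #|Tset p| == alpha)); last first.
  move=> p; apply/idP/idP => [/asboolP/inL_iff/eqP//|/eqP/inL_iff/asboolP//].
rewrite big_mkcond big_flat mulr_sumr; apply: eq_bigr => h _.
rewrite /basis_el -scalemxAl mxtraceZ TR exprMn sq_sqrt_inv.
have EF : forall b, [ffun t => flat h (idx b t)] = h b.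
  by move=> b; apply/ffunP => t; rewrite ffunE flat_idx.
under eq_bigr => b _ do rewrite EF.
rewrite prodrXl.
have [z|nz] := eqVneq (\prod_(b < m) fq g (h b)) 0.
  by rewrite z expr0n /= mulr0; case: ifP; case: ifP; rewrite ?mulr0.
rewrite DEG //.
  by case: ifP; rewrite ?mulr0.
move=> b; apply: fq_xconst; apply: contra nz => /eqP z.
by rewrite (bigD1 b) //= z mul0r.
Qed.

End Main.

Section Poly.
Variable R : realType.
Local Notation C := R[i].

Definition S1 (u1 u1' u2 u2' : bool) : {poly C} :=
  \sum_(a : 'I_4) (pauli1 R a u1 u1' * pauli1 R a u2 u2')%:P * 'X^(d1 a).

Definition S1t (u1 u1' u2 u2' : bool) : {poly C} :=
  if (u1 == u1') && (u2 == u2') then 1 + (if u1 == u2 then 1 else -1) * 'X^2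
  else if (u1 != u1') && (u2 != u2') then (if u1 == u2 then 0 else 2%:R * 'X)
  else 0.

Lemma ii : 'i * 'i = -1 :> C.
Proof. by apply/eqP; rewrite eq_complex /=; apply/andP; split; apply/eqP; ring. Qed.

Lemma S1E u1 u1' u2 u2' : S1 u1 u1' u2 u2' = S1t u1 u1' u2 u2'.
Proof.
rewrite /S1 /S1t !big_ord_recl big_ord0 /=.
case: u1; case: u1'; case: u2; case: u2'; rewrite /pauli1 /d1 /= ?mulrN ?mulNr ?opprK ?ii;
  rewrite ?mulr0 ?mul0r ?mulr1 ?mul1r ?polyC0 ?polyC1 ?polyCN ?addr0 ?add0r ?mul0r; ring.
Qed.

End Poly.

Section Trig.
Variable R : realType.
Variable g : R.

Lemma trig_facts : let c := cos (g / 4) in let s := sin (g / 4) in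
  [/\ N2 g = 4 * (c ^+ 2 - s ^+ 2) ^+ 2, N4 g = 6 * (c ^+ 2 + s ^+ 2) ^+ 2 + 32 * (c ^+ 2 * s ^+ 2),
      N6 g = 4 * (c ^+ 2 - s ^+ 2) ^+ 2 & (c ^+ 2 + s ^+ 2) ^+ 2 = 1].
Proof.
move=> c s.
have h2 : g / 2 = (g / 4) *+ 2 by rewrite mulr2n; field.
have hcs : c ^+ 2 + s ^+ 2 = 1 by exact: cos2Dsin2.
have hc : cos (g / 2) = c ^+ 2 - s ^+ 2.
  rewrite h2 cos_mulr2n -/c; rewrite mulr2n; nra.
have hs : sin (g / 2) = (c * s) *+ 2 by rewrite h2 sin_mulr2n.
rewrite /N2 /N4 /N6 hc hs hcs expr1n; split => //.
rewrite mulr2n; nra.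
Qed.

End Trig.

Lemma sum_pair (A B : finType) (V : nmodType) (F : A * B -> V) :
  \sum_(p : A * B) F p = \sum_(a : A) \sum_(b : B) F (a, b).
Proof. by rewrite pair_bigA; apply: eq_bigr => -[a b]. Qed.

Section QP.
Variable R : realType.
Variable g : R.
Local Notation C := R[i].

Definition Qp : {poly C} :=
  \sum_(q : {ffun 'I_4 -> 'I_4}) (fq g q ^+ 2) *: 'X^(dblock q).

Definition coefU (U : (bool * bool) * (bool * bool)) : C :=
  amp g U.1.1 * amp g U.1.2 * (amp g U.2.1 * amp g U.2.2).

Lemma fq_sq q : fq g q ^+ 2 = \sum_(U : (bool * bool) * (bool * bool))
   coefU U * \prod_(t : 'I_4) (pauli1 R (q t) U.1.1 U.1.2 * pauli1 R (q t) U.2.1 U.2.2).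
Proof.
rewrite expr2 /fq (pair_bigA _ (fun u u' => amp g u * amp g u' * pi4 R q u u')) /=.
set F := fun p : bool * bool => amp g p.1 * amp g p.2 * pi4 R q p.1 p.2.
transitivity (\sum_(x : bool * bool) \sum_(y : bool * bool) F x * F y).
  by rewrite mulr_suml; apply: eq_bigr => x _; rewrite mulr_sumr.
rewrite pair_bigA /=; apply: eq_bigr => U _.
by rewrite /F /coefU /pi4 big_split /=; ring.
Qed.

Lemma Qp_expand : Qp = \sum_(U : (bool * bool) * (bool * bool))
   coefU U *: (S1 R U.1.1 U.1.2 U.2.1 U.2.2) ^+ 4.
Proof.
rewrite /Qp.
under eq_bigr => q _ do rewrite fq_sq scaler_suml.
rewrite exchange_big /=; apply: eq_bigr => U _.
under eq_bigr => q _ do rewrite -scalerA.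
rewrite -scaler_sumr; congr (_ *: _).
transitivity (\sum_(q : {ffun 'I_4 -> 'I_4}) \prod_(t : 'I_4)
   ((pauli1 R (q t) U.1.1 U.1.2 * pauli1 R (q t) U.2.1 U.2.2)%:P * 'X^(d1 (q t)))).
  apply: eq_bigr => q _; rewrite /dblock expr_sum -mul_polyC rmorph_prod -big_split.
  by [].
rewrite -(bigA_distr_bigA (fun (t : 'I_4) (a : 'I_4) =>
   (pauli1 R a U.1.1 U.1.2 * pauli1 R a U.2.1 U.2.2)%:P * 'X^(d1 a))) /=.
by rewrite prodr_const card_ord.
Qed.


Lemma Qp_val : Qp = 1 + ((N2 g)%:C%:P * 'X^2 + ((N4 g)%:C%:P * 'X^4 +
                        ((N6 g)%:C%:P * 'X^6 + 'X^8))).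
Proof.
have [e2 e4 e6 e1] := trig_facts g.
set c := cos (g / 4) in e2 e4 e6 e1; set s := sin (g / 4) in e2 e4 e6 e1.
transitivity (((c ^+ 2 + s ^+ 2) ^+ 2)%:C%:P + ((4 * (c ^+ 2 - s ^+ 2) ^+ 2)%:C%:P * 'X^2 +
   ((6 * (c ^+ 2 + s ^+ 2) ^+ 2 + 32 * (c ^+ 2 * s ^+ 2))%:C%:P * 'X^4 +
   ((4 * (c ^+ 2 - s ^+ 2) ^+ 2)%:C%:P * 'X^6 + ((c ^+ 2 + s ^+ 2) ^+ 2)%:C%:P * 'X^8)))).
  rewrite Qp_expand sum_pair sum_pair.
  under eq_bigr => a _ do under eq_bigr => b _ do rewrite sum_pair.
  rewrite !big_bool /= !S1E /S1t /coefU /amp /cC /sC /= -!mul_polyC -/c -/s.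
  ring.
by rewrite e2 e4 e6 e1 rmorph1 mul1r.
Qed.

End QP.

Section Gen.
Variable K : fieldType.

Lemma prod_scaleX (I : finType) (a : I -> K) (k : I -> nat) :
  \prod_(i : I) (a i *: 'X^(k i)) = (\prod_(i : I) a i) *: 'X^(\sum_(i : I) k i)%N.
Proof.
rewrite -mul_polyC rmorph_prod -prodrXr -big_split /=.
by apply: eq_bigr => i _; rewrite mul_polyC.
Qed.

Lemma coef_gen (Q : finType) m alpha (F : Q -> K) (d : Q -> nat) :
  \sum_(h : {ffun 'I_m -> Q})
     (if (\sum_(b < m) d (h b))%N == alpha then \prod_(b < m) F (h b) else 0) =
  ((\sum_(q : Q) F q *: 'X^(d q)) ^+ m)`_alpha.
Proof.
have -> : (\sum_(q : Q) F q *: 'X^(d q)) ^+ m =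
          \prod_(b : 'I_m) \sum_(q : Q) F q *: 'X^(d q).
  by rewrite prodr_const card_ord.
rewrite bigA_distr_bigA coef_sum; apply: eq_bigr => h _.
rewrite prod_scaleX coefZ coefXn eq_sym.
by case: eqP; rewrite ?mulr1 ?mulr0.
Qed.

Lemma BINW (A : comPzRingType) (a b : A) k B : (k < B)%N ->
  (a + b) ^+ k = \sum_(i < B) (a ^+ i * b ^+ (k - i)) *+ 'C(k, i).
Proof.
move=> hk; rewrite addrC exprDn (big_ord_widen B (fun i => b ^+ (k - i) * a ^+ i *+ 'C(k, i))) //.
rewrite big_mkcond /=; apply: eq_bigr => i _.
case: ifP => h; first by rewrite mulrC.
by rewrite bin_small ?mulr0n //; lia.
Qed.

End Gen.

Definition KK (m i0 i2 i4 i6 : nat) : nat :=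
  ('C(m, i0) * 'C(m - i0, i2) * 'C(m - i0 - i2, i4) * 'C(m - i0 - i2 - i4, i6))%N.

Lemma expand4 (A : comPzRingType) (x0 x1 x2 x3 x4 : A) m :
  (x0 + (x1 + (x2 + (x3 + x4)))) ^+ m =
  \sum_(i0 < m.+1) \sum_(i2 < m.+1) \sum_(i4 < m.+1) \sum_(i6 < m.+1)
    (x0 ^+ i0 * (x1 ^+ i2 * (x2 ^+ i4 * (x3 ^+ i6 * x4 ^+ (m - i0 - i2 - i4 - i6)))))
      *+ KK m i0 i2 i4 i6.
Proof.
rewrite (BINW _ _ (ltnSn m)); apply: eq_bigr => i0 _.
have h1 : (m - i0 < m.+1)%N by lia.
rewrite (BINW _ _ h1) mulr_sumr -sumrMnl; apply: eq_bigr => i2 _.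
have h2 : (m - i0 - i2 < m.+1)%N by lia.
rewrite (BINW _ _ h2) mulr_sumr -sumrMnl mulr_sumr -sumrMnl; apply: eq_bigr => i4 _.
have h3 : (m - i0 - i2 - i4 < m.+1)%N by lia.
rewrite (BINW _ _ h3) mulr_sumr -sumrMnl mulr_sumr -sumrMnl mulr_sumr -sumrMnl.
apply: eq_bigr => i6 _.
rewrite !mulrnAr -!mulrnA /KK; congr (_ *+ _); ring.
Qed.

Lemma KK_fact m i0 i2 i4 i6 : (i0 + i2 + i4 + i6 <= m)%N ->
  (KK m i0 i2 i4 i6 * (i0`! * i2`! * i4`! * i6`! * (m - i0 - i2 - i4 - i6)`!))%N = m`!.
Proof.
move=> h.
have h0 := @bin_fact m i0 ltac:(lia).
have h2 := @bin_fact (m - i0) i2 ltac:(lia).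
have h4 := @bin_fact (m - i0 - i2) i4 ltac:(lia).
have h6 := @bin_fact (m - i0 - i2 - i4) i6 ltac:(lia).
rewrite -{}h0 -{}h2 -{}h4 -{}h6 /KK; ring.
Qed.

Lemma KK_zero m i0 i2 i4 i6 : (m < i0 + i2 + i4 + i6)%N -> KK m i0 i2 i4 i6 = 0%N.
Proof.
move=> h; rewrite /KK.
case: (ltnP m i0) => h0; first by rewrite (bin_small h0) !mul0n.
case: (ltnP (m - i0) i2) => h2; first by rewrite (bin_small h2) !muln0 mul0n.
case: (ltnP (m - i0 - i2) i4) => h4; first by rewrite (bin_small h4) muln0 !mul0n.
by rewrite (@bin_small (m - i0 - i2 - i4) i6) ?muln0 //; lia.
Qed.

Section Multi.
Variable R : realType.
Local Notation C := R[i].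

Lemma mono (i0 i2 i4 i6 r : nat) (a2 a4 a6 : C) :
  1 ^+ i0 * ((a2%:P * 'X^2) ^+ i2 * ((a4%:P * 'X^4) ^+ i4 *
     ((a6%:P * 'X^6) ^+ i6 * ('X^8) ^+ r))) =
  (a2 ^+ i2 * a4 ^+ i4 * a6 ^+ i6)%:P * 'X^(2 * i2 + 4 * i4 + 6 * i6 + 8 * r) :> {poly C}.
Proof.
rewrite expr1n mul1r !exprMn -!rmorphXn !exprD !expr0.
rewrite !rmorphM; ring.
Qed.

Lemma inner_sum m a alpha (W : nat -> nat) (T : nat -> C) :
  \sum_(i8 < m.+1 | (a + i8 == m)%N && (W i8 == alpha)) T i8 =
  if (a <= m)%N then (if W (m - a)%N == alpha then T (m - a)%N else 0) else 0.
Proof.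
case: (leqP a m) => h.
  have hr : (m - a < m.+1)%N by lia.
  rewrite big_mkcond (bigD1 (Ordinal hr)) //= big1 ?addr0.
    by have -> : (a + (m - a) == m)%N by apply/eqP; lia.
  move=> i hi; have -> : (a + i == m)%N = false; last by [].
  apply/negbTE; apply: contra hi => /eqP e; apply/eqP/val_inj => /=; lia.
apply: big1 => i /andP[/eqP e _]; lia.
Qed.

Lemma multi_coef m alpha (a2 a4 a6 : C) :
  ((1 + (a2%:P * 'X^2 + (a4%:P * 'X^4 + (a6%:P * 'X^6 + 'X^8)))) ^+ m)`_alpha =
  \sum_(i0 < m.+1) \sum_(i2 < m.+1) \sum_(i4 < m.+1) \sum_(i6 < m.+1)
  \sum_(i8 < m.+1 | (i0 + i2 + i4 + i6 + i8 == m)%N &&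
                    (2 * i2 + 4 * i4 + 6 * i6 + 8 * i8 == alpha)%N)
     ((m`!)%:R / ((i0`! * i2`! * i4`! * i6`! * i8`!)%N)%:R
      * a2 ^+ i2 * a4 ^+ i4 * a6 ^+ i6 * 1 ^+ i8).
Proof.
rewrite expand4 coef_sum; apply: eq_bigr => i0 _.
rewrite coef_sum; apply: eq_bigr => i2 _.
rewrite coef_sum; apply: eq_bigr => i4 _.
rewrite coef_sum; apply: eq_bigr => i6 _.
rewrite (inner_sum m (i0 + i2 + i4 + i6) alpha
  (fun i8 => 2 * i2 + 4 * i4 + 6 * i6 + 8 * i8)%N
  (fun i8 => (m`!)%:R / ((i0`! * i2`! * i4`! * i6`! * i8`!)%N)%:R
      * a2 ^+ i2 * a4 ^+ i4 * a6 ^+ i6 * 1 ^+ i8)).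
rewrite coefMn mono coefCM coefXn.
case: (leqP (i0 + i2 + i4 + i6) m) => h; last by rewrite KK_zero.
have -> : (m - i0 - i2 - i4 - i6 = m - (i0 + i2 + i4 + i6))%N by lia.
rewrite eq_sym; case: eqP => _; last by rewrite mulr0 mul0rn.
rewrite mulr1 expr1n mulr1 -mulr_natl -(KK_fact h).
have -> : (m - i0 - i2 - i4 - i6 = m - (i0 + i2 + i4 + i6))%N by lia.
rewrite natrM mulr1 mulfK; last by rewrite pnatr_eq0 -!lt0n !muln_gt0 !fact_gt0.
rewrite -mulr_natl; ring.
Qed.

End Multi.

Lemma main_eq (R : realType) (m : nat) (g : R) (alpha : nat) :
  P_alpha alpha (rho (m * 4) g) = (P_formula (m * 4) alpha g)%:C.
Proof.
rewrite P_sum (coef_gen _ _ (fun q => fq g q ^+ 2) dblock) -/(Qp g) Qp_val multi_coef.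
rewrite /P_formula mulnK // [in RHS]rmorphM; congr (GRing.mul _ _).
rewrite rmorph_sum; apply: eq_bigr => i0 _.
rewrite rmorph_sum; apply: eq_bigr => i2 _.
rewrite rmorph_sum; apply: eq_bigr => i4 _.
rewrite rmorph_sum; apply: eq_bigr => i6 _.
rewrite rmorph_sum; apply: eq_bigr => i8 _.
by rewrite [in RHS]rmorphM [in RHS]rmorphM [in RHS]rmorphM [in RHS]rmorphM [in RHS]rmorphM fmorphV !rmorph_nat !rmorphXn rmorph1.
Qed.

Unset Implicit Arguments. Set Strict Implicit.

Theorem mainTheorem10 (R : realType) (n : nat) (g : R) (alpha : nat) :
  (0 < n)%N -> (4 %| n)%N -> (alpha <= 2 * n)%N ->
  P_alpha alpha (rho n g) = (P_formula n alpha g)%:C /\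
  (odd alpha -> P_alpha alpha (rho n g) = 0).
Proof.
move=> hn /dvdnP [m ->] ha.
split; first exact: main_eq.
move=> hodd; rewrite main_eq /P_formula /= mulnK //.
rewrite big1 ?mulr0 ?rmorph0 // => i0 _.
rewrite big1 // => i2 _.
rewrite big1 // => i4 _.
rewrite big1 // => i6 _.
rewrite big1 // => i8 /andP[_ /eqP e].
move: hodd; rewrite -e; lia.
Qed.
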